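(* In the setting below, for all $i,j\in\{1,\ldots,N\}$, the coefficient of $b_j$ in the expansion of the class of $J\,b_i$ in the basis $B$ of $\mathcal{A}$ equals $\mathrm{Tr}(b_i\,b_j^* )$. (That is, the multiplication-by-$J$ map on $\mathcal{A}$ has matrix entries $\mathrm{Tr}(b_ib_j^* )$.)
   Context: Setting: $\mathbb{K}$ algebraically closed, $\mathbf{x}=(x_1,\ldots,x_m)$, $f_1,\ldots,f_s\in\mathbb{K}[\mathbf{x}]$ of degrees $d_i$, $\mathcal{I}=\langle f_1,\ldots,f_s\rangle$, $\mathcal{A}=\mathbb{K}[\mathbf{x}]/\mathcal{I}$ finite dimensional of dimension $N$. $\mathbb{K}[\mathbf{x}]_k$ = polynomials of total degree $\le k$; $\langle f_1,\ldots,f_s\rangle_d:=\{\sum_i q_if_i:\deg q_i\le d-d_i\}$; $\mathrm{Mon}_\le(\Delta)$ = monomials of degree $\le\Delta$. $B=[b_1,\ldots,b_N]$ are monomials $b_i=\mathbf{x}^{\alpha_i}$ of degree $\le D$ whose classes form a basis of $\mathcal{A}$, and $\Delta\ge2D$ is such that their classes also form a basis of $\mathbb{K}[\mathbf{x}]_\Delta/(\langle f_1,\ldots,f_s\rangle_{\Delta+1}\cap\mathbb{K}[\mathbf{x}]_\Delta)$. $\mathrm{Mac}_\Delta(\mathbf{f})$ is a matrix whose rows are the coefficient vectors (w.r.t. $\mathrm{Mon}_\le(\Delta)$) of a basis of $\langle f_1,\ldots,f_s\rangle_{\Delta+1}\cap\mathbb{K}[\mathbf{x}]_\Delta$. Fix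 $\mathbf{y}=(y_\alpha)_{|\alpha|\le\Delta}$ with $\mathrm{Mac}_\Delta(\mathbf{f})\mathbf{y}=0$ such that the moment matrix $\mathfrak{M}_B(\mathbf{y})=[y_{\alpha_i+\alpha_j}]_{i,j=1}^N$ is invertible. Define $\Lambda\in\mathcal{A}^*$ by $\Lambda(g)=\sum_{i}y_{\alpha_i}g_i$ where $g=\sum_i g_ib_i$ in $\mathcal{A}$. Write $\mathfrak{M}_B(\mathbf{y})^{-1}=[c_{ij}]$ and $b_i^*:=\sum_{j=1}^N c_{ji}b_j$. The generalized Jacobian $J$ is the unique element of $\mathrm{span}(b_1,\ldots,b_N)$ congruent to $\sum_{i=1}^N b_ib_i^*$ modulo $\mathcal{I}$. For $h\in\mathcal{A}$, $\mathrm{Tr}(h)$ is the trace of the $\mathbb{K}$-linear map $\mathcal{A}\to\mathcal{A}$, $g\mapsto hg$. *)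

(* Defs.v *)
From HB Require Import structures.
From mathcomp Require Import all_boot all_order all_algebra.
From mathcomp Require Import mpoly.
Set Implicit Arguments. Unset Strict Implicit. Unset Printing Implicit Defensive.
Import Order.TTheory GRing.Theory.
Local Open Scope ring_scope.

Section Defs.
Variables (K : fieldType) (m s : nat) (f : 'I_s -> {mpoly K[m]}).

(* total degree, with the convention deg 0 = 0 (only used for nonzero q) *)
Definition tdeg (p : {mpoly K[m]}) : nat := (msize p).-1.

Definition in_ideal (p : {mpoly K[m]}) : Prop :=
  exists q : 'I_s -> {mpoly K[m]}, p = \sum_(k < s) q k * f k.

Definition in_ideal_trunc (d : nat) (p : {mpoly K[m]}) : Prop :=
  exists q : 'I_s -> {mpoly K[m]}, p = \sum_(k < s) q k * f k /\
    forall k, q k != 0 -> (tdeg (q k) + tdeg (f k) <= d)%N.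

(* K[x]_k : polynomials of total degree <= k *)
Definition deg_le (k : nat) (p : {mpoly K[m]}) : Prop := (msize p <= k.+1)%N.

Variables (N : nat) (alpha : 'I_N -> 'X_{1..m}).

Definition bmon (i : 'I_N) : {mpoly K[m]} := 'X_[alpha i].

Definition combB (c : 'I_N -> K) : {mpoly K[m]} := \sum_(j < N) c j *: bmon j.

(* the classes of b_1..b_N form a basis of the quotient of the space P
   (a subspace of K[x]) by the subspace S: every element of P is congruent
   modulo S to a unique linear combination of the b_j *)
Definition basis_mod (P S : {mpoly K[m]} -> Prop) : Prop :=
  forall p, P p -> exists! c : 'I_N -> K, S (p - combB c).

(* t = Tr(h) : trace of the multiplication-by-h map on A = K[x]/I,
   computed as the trace of its matrix in the basis B *)
Definition is_traceA (h : {mpoly K[m]}) (t : K) : Prop :=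
  exists M : 'M[K]_N,
    (forall i, in_ideal (h * bmon i - combB (fun j => M i j))) /\ t = \tr M.

Definition pair_y (y : 'X_{1..m} -> K) (p : {mpoly K[m]}) : K :=
  \sum_(a <- msupp p) mcoeff a p * y a.

Definition moment_mx (y : 'X_{1..m} -> K) : 'M[K]_N :=
  \matrix_(i, j) y (alpha i + alpha j)%MM.

Definition bstar (y : 'X_{1..m} -> K) (i : 'I_N) : {mpoly K[m]} :=
  \sum_(j < N) (invmx (moment_mx y)) j i *: bmon j.

End Defs.

Arguments bmon K [m N] alpha i.
Arguments combB K [m N] alpha c.
Arguments basis_mod K [m N] alpha P S.

(* Main.v *)
Set Warnings "-notation-overridden,-ambiguous-paths,-notation-incompatible-prefix".
Require Import Defs.
From HB Require Import structures.
From mathcomp Require Import all_boot all_order all_algebra.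
From mathcomp Require Import mpoly.
From Stdlib Require Import ClassicalEpsilon.
Import GRing.Theory.
Local Open Scope ring_scope.

Lemma in_ideal0 (K : fieldType) m s (f : 'I_s -> {mpoly K[m]}) : in_ideal f 0.
Proof. by exists (fun _ => 0); rewrite big1 // => k _; rewrite mul0r. Qed.

Lemma in_idealD (K : fieldType) m s (f : 'I_s -> {mpoly K[m]}) p q :
  in_ideal f p -> in_ideal f q -> in_ideal f (p + q).
Proof.
move=> [a ->] [b ->]; exists (fun k => a k + b k).
by rewrite -big_split /=; apply: eq_bigr => k _; rewrite mulrDl.
Qed.

Lemma in_idealMl (K : fieldType) m s (f : 'I_s -> {mpoly K[m]}) p q :
  in_ideal f p -> in_ideal f (q * p).
Proof.
move=> [a ->]; exists (fun k => q * a k).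
by rewrite mulr_sumr; apply: eq_bigr => k _; rewrite mulrA.
Qed.

Lemma in_idealMr (K : fieldType) m s (f : 'I_s -> {mpoly K[m]}) p q :
  in_ideal f p -> in_ideal f (p * q).
Proof. by move=> h; rewrite mulrC; apply: in_idealMl. Qed.

Lemma in_idealZ (K : fieldType) m s (f : 'I_s -> {mpoly K[m]}) (c : K) p :
  in_ideal f p -> in_ideal f (c *: p).
Proof.
move=> [a ->]; exists (fun k => c *: a k).
by rewrite scaler_sumr; apply: eq_bigr => k _; rewrite scalerAl.
Qed.

Lemma in_idealN (K : fieldType) m s (f : 'I_s -> {mpoly K[m]}) p :
  in_ideal f p -> in_ideal f (- p).
Proof. by move=> h; rewrite -scaleN1r; apply: in_idealZ. Qed.

Lemma pair_yE (K : fieldType) m (y : 'X_{1..m} -> K) (p : {mpoly K[m]}) r :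
  uniq r -> {subset msupp p <= r} ->
  pair_y y p = \sum_(a <- r) p@_a * y a.
Proof.
move=> ur sub; rewrite /pair_y.
rewrite [RHS](bigID (fun a => a \in msupp p)) /= [X in _ + X]big1 ?addr0;
  last by move=> a /memN_msupp_eq0 ->; rewrite mul0r.
rewrite -[RHS]big_filter; apply: perm_big; apply: uniq_perm => //.
  by rewrite filter_uniq.
by move=> a; rewrite mem_filter; apply/idP/andP => [h|[]//]; split=> //; apply: sub.
Qed.

Lemma pair_yL (K : fieldType) m (y : 'X_{1..m} -> K) (c : K) (p q : {mpoly K[m]}) :
  pair_y y (c *: p + q) = c * pair_y y p + pair_y y q.
Proof.
set r := undup (msupp p ++ msupp q ++ msupp (c *: p + q)).
have ur : uniq r by apply: undup_uniq.
rewrite !(@pair_yE _ _ _ _ r) //; try by move=> a ha; rewrite mem_undup !mem_cat ha ?orbT.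
rewrite mulr_sumr -big_split /=; apply: eq_bigr => a _.
by rewrite mcoeffD mcoeffZ mulrDl mulrA.
Qed.

Lemma pair_yX (K : fieldType) m (y : 'X_{1..m} -> K) a :
  pair_y y 'X_[a] = y a.
Proof. by rewrite /pair_y msuppX big_seq1 mcoeffX eqxx mul1r. Qed.

Lemma pair_y_sum (K : fieldType) m (y : 'X_{1..m} -> K) N (F : 'I_N -> {mpoly K[m]}) :
  pair_y y (\sum_(k < N) F k) = \sum_(k < N) pair_y y (F k).
Proof.
apply: (big_morph _ (fun p q => _)).
  by move=> p q; rewrite -[p]scale1r pair_yL mul1r scale1r.
by rewrite /pair_y msupp0 big_nil.
Qed.

Lemma pair_yZ (K : fieldType) m (y : 'X_{1..m} -> K) c (p : {mpoly K[m]}) :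
  pair_y y (c *: p) = c * pair_y y p.
Proof.
have h0 : pair_y y 0 = 0 by rewrite /pair_y msupp0 big_nil.
by rewrite -[c *: p]addr0 pair_yL h0 addr0.
Qed.

Theorem proposition3p2 (K : closedFieldType) (m s : nat)
    (f : 'I_s -> {mpoly K[m]}) (N : nat) (alpha : 'I_N -> 'X_{1..m})
    (D Delta : nat) (y : 'X_{1..m} -> K) (J : {mpoly K[m]}) :
  (forall i, mdeg (alpha i) <= D)%N ->
  basis_mod K alpha (fun _ => True) (in_ideal f) ->
  (2 * D <= Delta)%N ->
  basis_mod K alpha (deg_le Delta)
    (fun p => in_ideal_trunc f Delta.+1 p /\ deg_le Delta p) ->
  (forall p, in_ideal_trunc f Delta.+1 p -> deg_le Delta p -> pair_y y p = 0) ->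
  moment_mx alpha y \in unitmx ->
  (exists a : 'I_N -> K, J = combB K alpha a) ->
  in_ideal f (J - \sum_(i < N) bmon K alpha i * bstar alpha y i) ->
  forall (i j : 'I_N) (c : 'I_N -> K),
    in_ideal f (J * bmon K alpha i - combB K alpha c) ->
    is_traceA f alpha (bmon K alpha i * bstar alpha y j) (c j).
Proof.
move=> hD hB hDel hB2 hy hU _ hJ i j c hc.
set bm := bmon K alpha.
have ex p : exists c0, in_ideal f (p - combB K alpha c0).
  by have [c0 [h _]] := hB p I; exists c0.
pose co p := proj1_sig (constructive_indefinite_description _ (ex p)).
have coP p : in_ideal f (p - combB K alpha (co p)).
  exact: proj2_sig (constructive_indefinite_description _ (ex p)).
have coU p c1 : in_ideal f (p - combB K alpha c1) -> co p = c1.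
  move=> h1; have [c0 [_ Hu]] := hB p I.
  by rewrite -(Hu _ (coP p)) (Hu _ h1).
have trI p : in_ideal_trunc f Delta.+1 p -> in_ideal f p.
  by move=> [q [-> _]]; exists q.
have combL a c1 c2 : combB K alpha (fun k => a * c1 k + c2 k)
    = a *: combB K alpha c1 + combB K alpha c2.
  rewrite /combB scaler_sumr -big_split /=; apply: eq_bigr => k _.
  by rewrite scalerDl scalerA.
have coL a p q : co (a *: p + q) = (fun k => a * co p k + co q k).
  apply: coU; rewrite combL.
  have -> : a *: p + q - (a *: combB K alpha (co p) + combB K alpha (co q))
     = a *: (p - combB K alpha (co p)) + (q - combB K alpha (co q)).
    by rewrite scalerBr opprD !addrA; congr (_ + _); rewrite addrAC.
  by apply: in_idealD; [apply: in_idealZ|]; apply: coP.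
have coI p q : in_ideal f (p - q) -> co p = co q.
  move=> h1; apply: coU.
  have -> : p - combB K alpha (co q) = (p - q) + (q - combB K alpha (co q)).
    by rewrite addrA subrK.
  by apply: in_idealD => //; apply: coP.
have co0 : co 0 = (fun _ => 0).
  apply: coU; rewrite /combB big1 ?subrr; first exact: in_ideal0.
  by move=> k _; rewrite scale0r.
pose L p := \sum_(k < N) co p k * y (alpha k).
have LL a p q : L (a *: p + q) = a * L p + L q.
  rewrite /L coL mulr_sumr -big_split /=; apply: eq_bigr => k _.
  by rewrite mulrDl mulrA.
have L0 : L 0 = 0 by rewrite /L co0 big1 // => k _; rewrite mul0r.
have LZ a p : L (a *: p) = a * L p by rewrite -[a *: p]addr0 LL L0 addr0.
have Lsum (F : 'I_N -> {mpoly K[m]}) : L (\sum_(k < N) F k) = \sum_(k < N) L (F k).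
  apply: (big_morph _ (fun p q => _) L0).
  by move=> p q; rewrite -[p]scale1r LL mul1r scale1r.
have LI p q : in_ideal f (p - q) -> L p = L q by move=> h1; rewrite /L (coI p q h1).
set M := moment_mx alpha y.
have Lbb k l : L (bm k * bm l) = M k l.
  rewrite /bm /bmon -mpolyXD.
  have dX : deg_le Delta ('X_[alpha k + alpha l] : {mpoly K[m]}).
    rewrite /deg_le msizeX mdegD ltnS.
    apply: leq_trans hDel; rewrite mul2n -addnn; exact: leq_add.
  have [c0 [[h1 h2] _]] := hB2 _ dX.
  have := hy _ h1 h2.
  rewrite addrC -scaleN1r pair_yL pair_yX /combB pair_y_sum.
  move=> /eqP; rewrite mulN1r addrC subr_eq0 => /eqP E.
  rewrite /L (coU _ _ (trI _ h1)) /M /moment_mx mxE E.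
  by apply: eq_bigr => k0 _; rewrite pair_yZ /bmon pair_yX.
have Ldual k l : L (bm k * bstar alpha y l) = (k == l)%:R.
  rewrite /bstar mulr_sumr.
  rewrite (eq_bigr (fun k0 => invmx M k0 l *: (bm k * bm k0))); last first.
    by move=> k0 _; rewrite scalerAr.
  rewrite Lsum.
  rewrite (eq_bigr (fun k0 => M k k0 * invmx M k0 l)); last first.
    by move=> k0 _; rewrite LZ Lbb mulrC.
  transitivity ((M *m invmx M) k l); first by rewrite mxE.
  by rewrite mulmxV // mxE.
have Lco g l : L (g * bstar alpha y l) = co g l.
  rewrite (LI _ (combB K alpha (co g) * bstar alpha y l)); last first.
    by rewrite -mulrBl; apply: in_idealMr; apply: coP.
  rewrite /combB mulr_suml.
  rewrite (eq_bigr (fun k => co g k *: (bm k * bstar alpha y l))); last first.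
    by move=> k _; rewrite scalerAl.
  rewrite Lsum (bigD1 l) //= LZ Ldual eqxx mulr1 big1 ?addr0 // => k /negbTE nk.
  by rewrite LZ Ldual nk mulr0.
set h := bm i * bstar alpha y j.
exists (\matrix_(i0, k) co (h * bm i0) k); split.
  move=> i0; rewrite /combB (eq_bigr (fun k => co (h * bm i0) k *: bm k)).
    exact: coP.
  by move=> k _; rewrite mxE.
rewrite /mxtrace (eq_bigr (fun k => L (h * bm k * bstar alpha y k))); last first.
  by move=> k _; rewrite mxE Lco.
rewrite -Lsum.
rewrite (eq_bigr (fun k => h * (bm k * bstar alpha y k))); last first.
  by move=> k _; rewrite mulrA.
rewrite -mulr_sumr -(LI (h * J)); last first.
  by rewrite -mulrBr; apply: in_idealMl.
rewrite /h mulrAC Lco mulrC.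
by rewrite (coU _ _ hc).
Qed.
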